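(* Let $r\ge 2$ be an integer and $0\le x<\pi$ real. Then $$\int_0^x \theta^{r-2}\log\left(\cos\frac\theta2\right)d\theta=\frac{x^{r-1}}{r-1}\log\left(\cos\frac x2\right)-\frac{(2\pi)^{r-1}}{r-1}\log\mathcal C_r\left(\frac x{2\pi}\right).$$
   Context: For an integer $r\ge2$ let $P_r(y)=(1-y)\exp\left(y+\frac{y^2}{2}+\cdots+\frac{y^r}{r}\right)$. The multiple cosine function of Kurokawa–Koyama of order $r\ge2$ is $\mathcal C_r(x)=\prod_{n\ge1,\ n\text{ odd}}\left\{P_r\left(\frac{x}{n/2}\right)P_r\left(-\frac{x}{n/2}\right)^{(-1)^{r-1}}\right\}^{(n/2)^{r-1}}$, interpreted as $\mathcal C_r(x)=\exp\Big(\sum_{n\ge1,\,n\text{ odd}}(n/2)^{r-1}\big[\operatorname{Log}P_r(2x/n)+(-1)^{r-1}\operatorname{Log}P_r(-2x/n)\big]\Big)$, where $\operatorname{Log}P_r(y):=\operatorname{Log}(1-y)+y+\frac{y^2}{2}+\cdots+\frac{y^r}{r}$ with $\operatorname{Log}$ the principal branch. The series converges and defines a holomorphic function on $D=\mathbb C\setminus\big((-\infty,-\tfrac12]\cup[\tfrac12,\infty)\big)$, positive on $(-\tfrac12,\tfrac12)$; $\log\mathcal C_r(x)$ denotes the exponent above (the real logarithm for real $|x|<\tfrac12$). *)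

(* Defs.v *)
From Stdlib Require Import Reals.
From Coquelicot Require Import Coquelicot.
Open Scope R_scope.

(* Log P_r(y) = Log(1-y) + y + y^2/2 + ... + y^r/r.
   Only used for real |y| < 1, where the principal Log is the real ln. *)
Definition LogP (r : nat) (y : R) : R :=
  ln (1 - y) + sum_n_m (fun k => y ^ k / INR k) 1 r.

(* log C_r(x) = sum over odd n >= 1 of (n/2)^(r-1) [Log P_r(2x/n) + (-1)^(r-1) Log P_r(-2x/n)],
   with odd n written as n = 2m+1, m >= 0.  Used for real |x| < 1/2. *)
Definition logC (r : nat) (x : R) : R :=
  Series (fun m : nat =>
    let n := INR (2 * m + 1) in
    (n / 2) ^ (r - 1) *
      (LogP r (2 * x / n) + (-1) ^ (r - 1) * LogP r (- (2 * x) / n))).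

(* Main.v *)
Require Import Defs.
From Stdlib Require Import Reals Lra Lia FunctionalExtensionality.
From Coquelicot Require Import Coquelicot.
Open Scope R_scope.


Lemma eqR (a b : R) : a = b -> a = b.
Proof. auto. Qed.

Lemma trig_eq (A B k S C : R) : S^2 + C^2 = 1 -> A - B = k*(S^2+C^2-1) -> A = B.
Proof. intros H1 H2. rewrite H1 in H2. lra. Qed.
Lemma sc1 s : sin s ^2 + cos s ^2 = 1.
Proof. pose proof (sin2_cos2 s). unfold Rsqr in H. lra. Qed.

Lemma RInt_lin2 (f g : R -> R) a b (u v : R) :
  ex_RInt f a b -> ex_RInt g a b ->
  RInt (fun s => u * f s + v * g s) a b = u * RInt f a b + v * RInt g a b.
Proof.
  intros Hf Hg.
  rewrite (RInt_plus (fun s => u * f s) (fun s => v * g s)).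
  - assert (E1 : RInt (fun s => u * f s) a b = u * RInt f a b) by exact (RInt_scal f a b u Hf).
    assert (E2 : RInt (fun s => v * g s) a b = v * RInt g a b) by exact (RInt_scal g a b v Hg).
    rewrite E1, E2. reflexivity.
  - apply (ex_RInt_scal f a b u Hf).
  - apply (ex_RInt_scal g a b v Hg).
Qed.

Lemma cont_der (f : R -> R) x : ex_derive f x -> continuous f x.
Proof. apply (@ex_derive_continuous R_AbsRing R_NormedModule). Qed.
Lemma exRInt_c (f : R -> R) a b :
  (forall z, Rmin a b <= z <= Rmax a b -> ex_derive f z) -> ex_RInt f a b.
Proof. intros H. apply (@ex_RInt_continuous R_CompleteNormedModule). intros z Hz. apply cont_der, H, Hz. Qed.

Definition Ii (n : nat) (x : R) := RInt (fun s => cos (x*s) * cos s ^ n) 0 (PI/2).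

Lemma ex_I n x : ex_RInt (fun s => cos (x*s) * cos s ^ n) 0 (PI/2).
Proof. apply exRInt_c. intros z _. auto_derive. auto. Qed.

Lemma I_rec n x : ((INR n + 2)^2 - x^2) * Ii (n+2) x = (INR n + 2) * (INR n + 1) * Ii n x.
Proof.
  set (F := fun s => x * sin (x*s) * cos s ^ (n+2) - (INR n + 2) * cos (x*s) * cos s ^ (n+1) * sin s).
  assert (H := @is_RInt_derive R_CompleteNormedModule F
    (fun s => cos (x*s) * ((x^2 - (INR n+2)^2) * cos s ^ (n+2) + (INR n+2)*(INR n+1) * cos s ^ n)) 0 (PI/2)).
  assert (E : RInt (fun s => cos (x*s) * ((x^2 - (INR n+2)^2) * cos s ^ (n+2) + (INR n+2)*(INR n+1) * cos s ^ n)) 0 (PI/2) = 0).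
  { assert (V : minus (F (PI/2)) (F 0) = 0).
    { unfold F, minus, plus, opp; simpl. rewrite cos_PI2, !Rmult_0_r, sin_0, ?cos_0. 
      replace (n+2)%nat with (S (n+1)) by lia. replace (n+1)%nat with (S n) by lia. simpl. ring. }
    transitivity (minus (F (PI/2)) (F 0)); [|exact V]. apply is_RInt_unique. 
    - apply H.
      + intros s _. unfold F. auto_derive. auto.
        replace (Init.Nat.pred (n+2)) with (n+1)%nat by lia.
        replace (Init.Nat.pred (n+1)) with (n)%nat by lia. rewrite !pow_add.
        apply (trig_eq _ _ (cos (x*s) * (INR n+2)*(INR n+1)*cos s ^n) (sin s) (cos s) (sc1 s)).
        rewrite !plus_INR; simpl INR. ring.
      + intros s _. apply cont_der. auto_derive. auto. }
  rewrite (RInt_ext _ (fun s => (x^2 - (INR n+2)^2) * (cos (x*s) * cos s ^ (n+2)) + ((INR n+2)*(INR n+1)) * (cos (x*s) * cos s ^ n))) in E.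
  2: { intros y _. apply eqR. ring. }
  rewrite RInt_lin2 in E by apply ex_I. unfold Ii. lra.
Qed.

Lemma I_1 x : (1 - x^2) * Ii 1 x = cos (x*(PI/2)).
Proof.
  set (F := fun s => x * sin (x*s) * cos s - cos (x*s) * sin s).
  assert (H := @is_RInt_derive R_CompleteNormedModule F (fun s => (x^2 - 1) * (cos (x*s) * cos s ^ 1)) 0 (PI/2)).
  assert (E : RInt (fun s => (x^2 - 1) * (cos (x*s) * cos s ^ 1)) 0 (PI/2) = - cos (x*(PI/2))).
  { assert (V : minus (F (PI/2)) (F 0) = - cos (x*(PI/2))).
    { unfold F, minus, plus, opp; simpl. rewrite cos_PI2, sin_PI2, !Rmult_0_r, sin_0, cos_0. apply eqR. ring. }
    transitivity (minus (F (PI/2)) (F 0)); [|exact V]. apply is_RInt_unique. 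
    - apply H.
      + intros s _. unfold F. auto_derive. auto. apply eqR. ring.
      + intros s _. apply cont_der. auto_derive. auto. }
  assert (E1 : RInt (fun s => (x^2 - 1) * (cos (x*s) * cos s ^ 1)) 0 (PI/2) = (x^2-1) * Ii 1 x)
    by exact (RInt_scal _ 0 (PI/2) (x^2-1) (ex_I 1 x)).
  lra.
Qed.

Fixpoint Qp (k : nat) (x : R) : R :=
  match k with O => 1 - x^2 | S k' => Qp k' x * ((2 * INR k' + 3)^2 - x^2) end.
Fixpoint Dp (k : nat) : R :=
  match k with O => 1 | S k' => Dp k' * ((2 * INR k' + 3) * (2 * INR k' + 2)) end.

Lemma INR_odd k : INR (2*k+1) = 2 * INR k + 1.
Proof. rewrite plus_INR, mult_INR. simpl. ring. Qed.

Lemma prodI k x : Qp k x * Ii (2*k+1) x = Dp k * cos (x*(PI/2)).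
Proof.
  induction k as [|k IH].
  - rewrite Rmult_1_l. apply I_1.
  - replace (2 * S k + 1)%nat with ((2*k+1)+2)%nat by lia.
    pose proof (I_rec (2*k+1) x) as R. rewrite INR_odd in R.
    simpl Qp. simpl Dp.
    replace ((2 * INR k + 1 + 2) ^ 2 - x ^ 2) with ((2 * INR k + 3) ^ 2 - x ^ 2) in R by ring.
    transitivity (Qp k x * (((2 * INR k + 3) ^ 2 - x ^ 2) * Ii (2 * k + 1 + 2) x)); [ring|].
    rewrite R. transitivity ((2 * INR k + 1 + 2) * (2 * INR k + 1 + 1) * (Qp k x * Ii (2 * k + 1) x)); [ring|].
    rewrite IH. ring.
Qed.

Lemma Qp_pos k x : 0 <= x < 1 -> 0 < Qp k x.
Proof.
  intros Hx. induction k as [|k IH]; simpl.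
  - nra.
  - pose proof (pos_INR k). apply Rmult_lt_0_compat; auto. nra.
Qed.

Lemma Dp_pos k : 0 < Dp k.
Proof.
  induction k as [|k IH]; simpl. lra. pose proof (pos_INR k).
  apply Rmult_lt_0_compat; auto. nra.
Qed.

Lemma cos_pos x : 0 <= x < 1 -> 0 < cos (x*(PI/2)).
Proof. intros Hx. pose proof PI_RGT_0. apply cos_gt_0; nra. Qed.

Lemma I_pos k x : 0 <= x < 1 -> 0 < Ii (2*k+1) x.
Proof.
  intros Hx. pose proof (prodI k x). pose proof (Qp_pos k x Hx). pose proof (Dp_pos k).
  pose proof (cos_pos x Hx).
  assert (0 < Qp k x * Ii (2*k+1) x) by (rewrite H; apply Rmult_lt_0_compat; auto).
  destruct (Rle_or_lt (Ii (2*k+1) x) 0); auto. nra.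
Qed.

Lemma cospow_ge0 s n : 0 <= s <= PI/2 -> 0 <= cos s ^ n.
Proof. intros Hs. apply pow_le. apply cos_ge_0; lra. Qed.

Lemma I_le n x : Ii n x <= Ii n 0.
Proof.
  unfold Ii. apply RInt_le. pose proof PI_RGT_0. lra. apply ex_I. apply ex_I.
  intros s Hs. rewrite Rmult_0_l, cos_0. pose proof (cospow_ge0 s n ltac:(lra)).
  pose proof (COS_bound (x*s)). nra.
Qed.

Lemma tcos_le_sin s : 0 <= s <= PI/2 -> s * cos s <= sin s.
Proof.
  intros Hs.
  assert (H := @is_RInt_derive R_CompleteNormedModule (fun u => sin u - u * cos u) (fun u => u * sin u) 0 s).
  assert (E : RInt (fun u => u * sin u) 0 s = minus (sin s - s * cos s) (sin 0 - 0 * cos 0)).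
  { apply is_RInt_unique. apply H.
    - intros u _. auto_derive. auto. apply eqR. ring.
    - intros u _. apply cont_der. auto_derive. auto. }
  assert (G : 0 <= RInt (fun u => u * sin u) 0 s).
  { apply RInt_ge_0. lra. apply exRInt_c. intros; auto_derive; auto.
    intros u Hu. apply Rmult_le_pos. lra. apply sin_ge_0; pose proof PI_RGT_0; lra. }
  rewrite E in G. unfold minus, plus, opp in G; simpl in G. rewrite sin_0 in G. lra.
Qed.

Lemma one_minus_cos u : - PI/2 <= u <= PI/2 -> 1 - cos u <= u^2/2.
Proof.
  intros Hu. destruct (cos_bound u 0 ltac:(lra) ltac:(lra)) as [H _].
  unfold cos_approx, cos_term in H. simpl in H. lra.
Qed.

Lemma I_gap n x : 0 <= x <= 1 ->
  Ii (n+2) 0 - Ii (n+2) x <= x^2/2 * (Ii n 0 - Ii (n+2) 0).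
Proof.
  intros Hx. unfold Ii.
  rewrite <- (Rmult_1_l (RInt (fun s => cos (0 * s) * cos s ^ (n+2)) 0 (PI/2))).
  replace (1 * RInt (fun s => cos (0 * s) * cos s ^ (n+2)) 0 (PI/2) - RInt (fun s => cos (x * s) * cos s ^ (n+2)) 0 (PI/2))
    with (1 * RInt (fun s => cos (0 * s) * cos s ^ (n+2)) 0 (PI/2) + (-1) * RInt (fun s => cos (x * s) * cos s ^ (n+2)) 0 (PI/2)) by ring.
  replace (x ^ 2 / 2 * (RInt (fun s => cos (0 * s) * cos s ^ n) 0 (PI / 2) - 1 * RInt (fun s => cos (0 * s) * cos s ^ (n+2)) 0 (PI/2)))
    with (x^2/2 * RInt (fun s => cos (0 * s) * cos s ^ n) 0 (PI / 2) + (-(x^2/2)) * RInt (fun s => cos (0 * s) * cos s ^ (n+2)) 0 (PI/2)) by ring.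
  rewrite <- !RInt_lin2 by apply ex_I.
  pose proof PI_RGT_0.
  apply RInt_le. lra.
  apply exRInt_c; intros; auto_derive; auto.
  apply exRInt_c; intros; auto_derive; auto.
  intros s Hs. rewrite Rmult_0_l, cos_0.
  pose proof (cospow_ge0 s n ltac:(lra)) as Hc.
  pose proof (one_minus_cos (x*s) ltac:(nra)) as Hm.
  pose proof (tcos_le_sin s ltac:(lra)) as Ht.
  assert (Hsc : 0 <= s * cos s) by (apply Rmult_le_pos; [lra| apply cos_ge_0; lra]).
  pose proof (sc1 s) as H1.
  replace (n+2)%nat with (S (S n)) by lia. simpl.
  set (c := cos s) in *. set (cn := c ^ n) in *. clearbody cn c.
  assert (A : (1 - cos (x*s)) * (c*(c*cn)) <= ((x*s)^2/2) * (c*(c*cn))).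
  { apply Rmult_le_compat_r. nra. lra. }
  assert (B : (s*c)^2 <= sin s ^2) by nra.
  assert (C : ((x*s)^2/2) * (c*(c*cn)) <= x^2/2 * cn * sin s ^2).
  { replace (((x*s)^2/2) * (c*(c*cn))) with (x^2/2 * cn * (s*c)^2) by field.
    apply Rmult_le_compat_l. nra. exact B. }
  assert (Hs2 : sin s ^2 = 1 - c^2) by lra. assert (D : x^2/2*cn*sin s^2 = x^2/2*cn - x^2/2*(c*(c*cn))) by (rewrite Hs2; field). lra.
Qed.

Lemma I0_gap n : Ii n 0 - Ii (n+2) 0 = Ii (n+2) 0 / (INR n + 1).
Proof.
  pose proof (I_rec n 0) as R. pose proof (pos_INR n).
  apply (Rmult_eq_reg_l ((INR n + 2)*(INR n + 1))). 2: nra.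
  field_simplify. 2: lra.
  replace ((INR n + 2) ^ 2 - 0 ^ 2) with ((INR n + 2) * (INR n + 2)) in R by ring.
  nra.
Qed.

Definition Sx (k : nat) (x : R) : R := sum_n (fun j => ln (1 - x^2 / (2 * INR j + 1)^2)) k.

Lemma S_eq k x : 0 <= x < 1 -> Sx k x = ln (Qp k x / Qp k 0).
Proof.
  intros Hx. unfold Sx. induction k as [|k IH].
  - rewrite sum_O. simpl. f_equal. field.
  - rewrite sum_Sn, IH, S_INR. simpl Qp. 
    pose proof (Qp_pos k x Hx). pose proof (Qp_pos k 0 ltac:(lra)). pose proof (pos_INR k).
    unfold plus; simpl. rewrite <- ln_mult.
    + f_equal. field. split; nra.
    + apply Rdiv_lt_0_compat; auto.
    + set (d := 2 * (INR k + 1) + 1). assert (Hd : 0 < d * (d * 1)) by (unfold d; nra).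
      assert (x * (x * 1) / (d * (d * 1)) < 1).
      { apply (Rmult_lt_reg_r (d*(d*1))); [lra|]. unfold Rdiv. rewrite Rmult_assoc, Rinv_l, Rmult_1_r by lra. unfold d; nra. }
      lra.
Qed.

Lemma ln_le_lin y : 0 < y -> ln y <= y - 1.
Proof. intros Hy. pose proof (exp_ineq1_le (ln y)). rewrite exp_ln in H; lra. Qed.

Lemma SA k x : 0 <= x < 1 ->
  ln (cos (x*(PI/2))) <= Sx (S k) x <= ln (cos (x*(PI/2))) + / INR (S k).
Proof.
  intros Hx.
  pose proof (prodI (S k) x) as Px. pose proof (prodI (S k) 0) as P0.
  rewrite Rmult_0_l, cos_0, Rmult_1_r in P0.
  pose proof (I_pos (S k) x Hx) as Ixp. pose proof (I_pos (S k) 0 ltac:(lra)) as I0p.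
  pose proof (Qp_pos (S k) x Hx) as Qxp. pose proof (Qp_pos (S k) 0 ltac:(lra)) as Q0p.
  pose proof (Dp_pos (S k)) as Dpp. pose proof (cos_pos x Hx) as cp.
  pose proof (I_le (2 * S k + 1) x) as Hle.
  pose proof (I_gap (2*k+1) x ltac:(lra)) as Hg. rewrite I0_gap, INR_odd in Hg.
  replace (2 * k + 1 + 2)%nat with (2 * S k + 1)%nat in Hg by lia.
  set (Ix := Ii (2 * S k + 1) x) in *. set (I0 := Ii (2 * S k + 1) 0) in *.
  set (c := cos (x * (PI/2))) in *.
  assert (Hq : Qp (S k) x / Qp (S k) 0 = c * (I0 / Ix)).
  { assert (E1 : Qp (S k) x = Dp (S k) * c / Ix) by (rewrite <- Px; field; lra).
    assert (E2 : Qp (S k) 0 = Dp (S k) / I0) by (rewrite <- P0; field; lra).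
    rewrite E1, E2. field. repeat split; lra. }
  rewrite S_eq by auto. rewrite Hq, ln_mult by (try apply Rdiv_lt_0_compat; lra).
  pose proof (pos_INR k) as Hk. rewrite S_INR.
  assert (Hy1 : 1 <= I0 / Ix).
  { apply (Rmult_le_reg_r Ix); auto. unfold Rdiv. rewrite Rmult_assoc, Rinv_l, Rmult_1_r; lra. }
  assert (Hlo : 0 <= ln (I0 / Ix)) by (rewrite <- ln_1; apply ln_le; lra).
  assert (Hhi : ln (I0 / Ix) <= I0 / Ix - 1) by (apply ln_le_lin; lra).
  assert (Hgap : I0 - Ix <= I0 / (4 * (INR k + 1))).
  { eapply Rle_trans; [exact Hg|].
    replace (2 * INR k + 1 + 1) with (2 * (INR k + 1)) by ring.
    assert (x^2 <= 1) by nra.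
    replace (I0 / (4 * (INR k + 1))) with (1/2 * (I0 / (2 * (INR k + 1)))) by (field; lra).
    apply Rmult_le_compat_r. apply Rdiv_le_0_compat; lra. lra. }
  assert (Hb : I0 / Ix - 1 <= / (INR k + 1)).
  { replace (I0 / Ix - 1) with ((I0 - Ix) / Ix) by (field; lra).
    apply (Rmult_le_reg_r Ix); auto. unfold Rdiv. rewrite Rmult_assoc, Rinv_l, Rmult_1_r by lra.
    assert (I0 / (4 * (INR k + 1)) <= / (INR k + 1) * Ix); [|lra].
    assert (I0 <= 4 * Ix).
    { assert (I0 / (4 * (INR k + 1)) <= I0 / 4).
      { unfold Rdiv. apply Rmult_le_compat_l. lra. apply Rinv_le_contravar. lra. lra. }
      lra. }
    replace (I0 / (4 * (INR k + 1))) with (/ (INR k + 1) * (I0 / 4)) by (field; lra).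
    apply Rmult_le_compat_l. left; apply Rinv_0_lt_compat; lra. lra. }
  lra.
Qed.

Definition Pol (r : nat) (u : R) := sum_n_m (fun k => u ^ k / INR k) 1 r.
Definition dPol (r : nat) (u : R) := sum_n_m (fun k => u ^ (k - 1)) 1 r.

Lemma Pol_S r u : Pol (S r) u = Pol r u + u ^ (S r) / INR (S r).
Proof.
  unfold Pol. destruct r.
  - rewrite sum_n_n, sum_n_m_zero by lia. unfold zero; simpl. ring.
  - rewrite sum_n_Sm by lia. reflexivity.
Qed.
Lemma dPol_S r u : dPol (S r) u = dPol r u + u ^ r.
Proof.
  unfold dPol. destruct r.
  - rewrite sum_n_n, sum_n_m_zero by lia. unfold zero; simpl. ring.
  - rewrite sum_n_Sm by lia. replace (S (S r) - 1)%nat with (S r) by lia. reflexivity.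
Qed.
Lemma Pol_0 u : Pol 0 u = 0.
Proof. unfold Pol. rewrite sum_n_m_zero by lia. reflexivity. Qed.
Lemma dPol_0 u : dPol 0 u = 0.
Proof. unfold dPol. rewrite sum_n_m_zero by lia. reflexivity. Qed.

Lemma Pol_der r u : is_derive (Pol r) u (dPol r u).
Proof.
  induction r as [|r IH].
  - rewrite dPol_0. apply (is_derive_ext (fun _ => 0)). intros; rewrite Pol_0; reflexivity.
    apply (@is_derive_const R_AbsRing R_NormedModule).
  - rewrite dPol_S. apply (is_derive_ext (fun u => Pol r u + u ^ (S r) / INR (S r))).
    intros; rewrite Pol_S; reflexivity.
    apply (@is_derive_plus R_AbsRing R_NormedModule). exact IH.
    auto_derive. auto. assert (Hn : INR (S r) <> 0) by (apply not_0_INR; lia). simpl INR in Hn. apply eqR. field. exact Hn.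
Qed.

Lemma Pol_at0 r : Pol r 0 = 0.
Proof. induction r. apply Pol_0. rewrite Pol_S, IHr. rewrite pow_i by lia. apply eqR. unfold Rdiv. ring. Qed.

Lemma dPol_geom r u : (1 - u) * dPol r u = 1 - u ^ r.
Proof.
  induction r. rewrite dPol_0. simpl; ring.
  rewrite dPol_S. rewrite Rmult_plus_distr_l, IHr. simpl. ring.
Qed.

Lemma LogP_eq r u : LogP r u = ln (1 - u) + Pol r u.
Proof. reflexivity. Qed.

Lemma LogP_der r u : u < 1 -> is_derive (LogP r) u (- u ^ r / (1 - u)).
Proof.
  intros Hu. apply (is_derive_ext (fun u => ln (1 - u) + Pol r u)). intros; reflexivity.
  replace (- u ^ r / (1 - u)) with (-1 / (1 - u) + dPol r u).
  apply (@is_derive_plus R_AbsRing R_NormedModule). auto_derive. lra. apply eqR. field. lra.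
  apply Pol_der.
  apply (Rmult_eq_reg_l (1 - u)). 2: lra. rewrite Rmult_plus_distr_l, dPol_geom. field. lra.
Qed.

Lemma LogP_0 r : LogP r 0 = 0.
Proof. rewrite LogP_eq, Pol_at0, Rminus_0_r, ln_1. ring. Qed.

Definition Gt (p : nat) (n t : R) : R :=
  t ^ (S p) / INR (S p) * ln (1 - (t / (n * PI)) ^ 2)
  - (2 * PI) ^ (S p) / INR (S p) *
    ((n / 2) ^ (S p) * (LogP (S (S p)) (2 * (t / (2 * PI)) / n)
       + (-1) ^ (S p) * LogP (S (S p)) (- (2 * (t / (2 * PI))) / n))).

Lemma neg1pow p : (-1)^p = 1 \/ (-1)^p = -1.
Proof. induction p; simpl; [left; ring|]. destruct IHp as [-> | ->]; [right|left]; ring. Qed.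

Lemma Gt_der p n t : 1 <= n -> 0 <= t < PI ->
  is_derive (Gt p n) t (t ^ p * ln (1 - (t / (n * PI)) ^ 2)).
Proof.
  intros Hn Ht. pose proof PI_RGT_0 as HPI. unfold Gt.
  assert (Ha0 : 0 <= t * / (n * PI)) by (apply Rmult_le_pos; [lra|left; apply Rinv_0_lt_compat; nra]).
  assert (Ha1 : t * / (n * PI) < 1).
  { apply (Rmult_lt_reg_r (n*PI)). nra. rewrite Rmult_assoc, Rinv_l by nra. nra. }
  replace (fun x => x ^ S p / INR (S p) * ln (1 - (x / (n * PI)) ^ 2) -
   (2 * PI) ^ S p / INR (S p) *
   ((n / 2) ^ S p *
    (LogP (S (S p)) (2 * (x / (2 * PI)) / n) +
     (-1) ^ S p * LogP (S (S p)) (- (2 * (x / (2 * PI))) / n))))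
  with (fun x => x ^ S p / INR (S p) * ln (1 - (x / (n * PI)) ^ 2) -
   (2 * PI) ^ S p / INR (S p) *
   ((n / 2) ^ S p *
    (LogP (S (S p)) (x * / (n * PI)) +
     (-1) ^ S p * LogP (S (S p)) ((-1) * (x * / (n * PI)))))).
  2: { apply functional_extensionality. intros x.
       replace (2*(x/(2*PI))/n) with (x*/(n*PI)) by (field; lra).
       replace (-(2*(x/(2*PI)))/n) with (-1*(x*/(n*PI))) by (field; lra). reflexivity. }
  auto_derive.
  - repeat split.
    + nra.
    + eexists. apply LogP_der. lra.
    + eexists. apply LogP_der. lra.
  - replace (Derive (fun x : R => LogP (S (S p)) x) (t * / (n*PI))) with (- (t*/(n*PI))^(S(S p)) / (1 - t*/(n*PI)))
      by (symmetry; apply (is_derive_unique (fun x => LogP (S (S p)) x)); apply LogP_der; lra).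
    replace (Derive (fun x : R => LogP (S (S p)) x) (-1 * (t * / (n*PI)))) with (- (-1 * (t*/(n*PI)))^(S(S p)) / (1 - -1 * (t*/(n*PI))))
      by (symmetry; apply (is_derive_unique (fun x => LogP (S (S p)) x)); apply LogP_der; lra).
    assert (Hq : INR (S p) <> 0) by (apply not_0_INR; lia). simpl INR in Hq.
    replace (1 - (t/(n*PI))^2) with (1 + - (t * / (n * PI) * (t * / (n * PI) * 1))) by (field; lra).
    set (L := ln (1 + - (t * / (n * PI) * (t * / (n * PI) * 1)))).
    set (q := match p with | 0%nat => 1 | S _ => INR p + 1 end) in *.
    rewrite !Rpow_mult_distr. unfold Rdiv. rewrite !Rpow_mult_distr, !pow_inv, !Rpow_mult_distr.
    rewrite <- !tech_pow_Rmult.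
    assert (Hnt : t < n * PI) by nra.
    assert (H1 : n ^ p <> 0) by (apply pow_nonzero; lra).
    assert (H2 : PI ^ p <> 0) by (apply pow_nonzero; lra).
    assert (H3 : 2 ^ p <> 0) by (apply pow_nonzero; lra).
    assert (H4 : 1 - t * / (n*PI) <> 0) by lra.
    assert (H5 : 1 - -1 * (t * / (n*PI)) <> 0) by lra.
    assert (H6 : 1 + - (t * / (n * PI) * (t * / (n * PI) * 1)) <> 0) by nra.
    destruct (neg1pow p) as [-> | ->]; apply eqR; field; repeat split; auto; nra.
Qed.

Lemma Gt_0 p n : 1 <= n -> Gt p n 0 = 0.
Proof.
  intros Hn. pose proof PI_RGT_0. unfold Gt.
  replace (2 * (0 / (2 * PI)) / n) with 0 by (field; lra).
  replace (- (2 * (0 / (2 * PI))) / n) with 0 by (field; lra).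
  rewrite !LogP_0. rewrite pow_i by lia. unfold Rdiv. ring.
Qed.

Lemma term_int p n X : 1 <= n -> 0 <= X < PI ->
  RInt (fun t => t ^ p * ln (1 - (t / (n * PI)) ^ 2)) 0 X = Gt p n X.
Proof.
  intros Hn HX. pose proof PI_RGT_0.
  transitivity (minus (Gt p n X) (Gt p n 0)).
  2: { rewrite (Gt_0 p n Hn). unfold minus, plus, opp; simpl. apply eqR. ring. }
  apply is_RInt_unique.
  apply (@is_RInt_derive R_CompleteNormedModule).
  - intros t Ht. rewrite Rmin_left in Ht by lra. rewrite Rmax_right in Ht by lra.
    apply Gt_der; lra.
  - intros t Ht. rewrite Rmin_left in Ht by lra. rewrite Rmax_right in Ht by lra.
    apply cont_der. auto_derive.
    assert (0 <= t / (n*PI) < 1).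
    { split. apply Rdiv_le_0_compat; nra.
      apply (Rmult_lt_reg_r (n*PI)). nra. unfold Rdiv. rewrite Rmult_assoc, Rinv_l by nra. nra. }
    unfold Rdiv in H0. nra.
Qed.

Lemma plusR (a b : R) : plus a b = a + b.
Proof. reflexivity. Qed.

Definition aj (j : nat) (t : R) : R := ln (1 - (t / (INR (2*j+1) * PI)) ^ 2).

Lemma nj_ge1 j : 1 <= INR (2*j+1).
Proof. rewrite INR_odd. pose proof (pos_INR j). lra. Qed.

Lemma term_is p j X : 0 <= X < PI ->
  is_RInt (fun t => t ^ p * aj j t) 0 X (Gt p (INR (2*j+1)) X).
Proof.
  intros HX. pose proof PI_RGT_0. pose proof (nj_ge1 j) as Hn. set (n := INR (2*j+1)) in *.
  assert (E : minus (Gt p n X) (Gt p n 0) = Gt p n X).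
  { rewrite (Gt_0 p n Hn). unfold minus, plus, opp; simpl. apply eqR. ring. }
  rewrite <- E. unfold aj. fold n.
  apply (@is_RInt_derive R_CompleteNormedModule).
  - intros t Ht. rewrite Rmin_left in Ht by lra. rewrite Rmax_right in Ht by lra.
    apply Gt_der; lra.
  - intros t Ht. rewrite Rmin_left in Ht by lra. rewrite Rmax_right in Ht by lra.
    apply cont_der. auto_derive.
    assert (0 <= t / (n*PI) < 1).
    { split. apply Rdiv_le_0_compat; nra.
      apply (Rmult_lt_reg_r (n*PI)). nra. unfold Rdiv. rewrite Rmult_assoc, Rinv_l by nra. nra. }
    unfold Rdiv in H0. nra.
Qed.

Lemma sum_is p k X : 0 <= X < PI ->
  is_RInt (fun t => t ^ p * sum_n (fun j => aj j t) k) 0 X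
    (sum_n (fun j => Gt p (INR (2*j+1)) X) k).
Proof.
  intros HX. induction k as [|k IH].
  - rewrite sum_O. apply (is_RInt_ext (fun t => t ^ p * aj 0 t)).
    intros; rewrite sum_O; reflexivity. apply term_is; auto.
  - rewrite sum_Sn. apply (is_RInt_ext (fun t => plus (t ^ p * sum_n (fun j => aj j t) k) (t ^ p * aj (S k) t))).
    intros t _. rewrite sum_Sn. unfold plus; simpl. apply eqR. ring.
    apply (@is_RInt_plus R_NormedModule). exact IH. apply term_is; auto.
Qed.

Lemma sum_Gt p k X :
  sum_n (fun j => Gt p (INR (2*j+1)) X) k =
  X ^ (S p) / INR (S p) * sum_n (fun j => aj j X) k
  - (2 * PI) ^ (S p) / INR (S p) * sum_n (fun j =>
      (INR (2*j+1) / 2) ^ (S p) * (LogP (S (S p)) (2 * (X / (2 * PI)) / INR (2*j+1))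
       + (-1) ^ (S p) * LogP (S (S p)) (- (2 * (X / (2 * PI))) / INR (2*j+1)))) k.
Proof.
  induction k as [|k IH].
  - rewrite !sum_O. unfold Gt, aj. reflexivity.
  - rewrite !sum_Sn. rewrite IH. unfold Gt, aj. unfold plus. simpl. apply eqR. ring.
Qed.

Lemma aj_Sx k t : sum_n (fun j => aj j t) k = Sx k (t / PI).
Proof.
  unfold Sx. apply sum_n_ext. intros j. unfold aj. rewrite INR_odd. f_equal.
  pose proof PI_RGT_0. assert (0 < 2 * INR j + 1) by (pose proof (pos_INR j); lra).
  field. lra.
Qed.

Lemma Sbound k t : 0 <= t < PI ->
  ln (cos (t/2)) <= sum_n (fun j => aj j t) (S k) <= ln (cos (t/2)) + / INR (S k).
Proof.
  intros Ht. pose proof PI_RGT_0. rewrite aj_Sx.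
  replace (t/2) with ((t/PI) * (PI/2)) by (field; lra).
  apply SA. split. apply Rdiv_le_0_compat; lra.
  apply (Rmult_lt_reg_r PI). lra. unfold Rdiv. rewrite Rmult_assoc, Rinv_l by lra. lra.
Qed.

Definition toR (a : R) : R := a.
Definition sR (a : nat -> R) (k : nat) : R := sum_n a k.

Lemma lc_ex p X : 0 <= X < PI -> ex_RInt (fun t => t ^ p * ln (cos (t / 2))) 0 X.
Proof.
  intros HX. pose proof PI_RGT_0. apply exRInt_c. intros z Hz.
  rewrite Rmin_left in Hz by lra. rewrite Rmax_right in Hz by lra.
  auto_derive. apply cos_gt_0; lra.
Qed.

Theorem theorem2p1 (r : nat) (x : R) :
  (2 <= r)%nat -> 0 <= x < PI ->
  RInt (fun t => t ^ (r - 2) * ln (cos (t / 2))) 0 x =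
    x ^ (r - 1) / INR (r - 1) * ln (cos (x / 2))
    - (2 * PI) ^ (r - 1) / INR (r - 1) * logC r (x / (2 * PI)).
Proof.
  intros Hr Hx. destruct r as [|[|p]]; try lia.
  replace (S (S p) - 2)%nat with p by lia. replace (S (S p) - 1)%nat with (S p) by lia.
  pose proof PI_RGT_0 as HPI.
  set (T := fun j : nat => (INR (2*j+1) / 2) ^ (S p) * (LogP (S (S p)) (2 * (x / (2 * PI)) / INR (2*j+1))
       + (-1) ^ (S p) * LogP (S (S p)) (- (2 * (x / (2 * PI))) / INR (2*j+1)))).
  assert (HT : logC (S (S p)) (x / (2 * PI)) = Series T) by reflexivity.
  rewrite HT.
  set (LHS := RInt (fun t => t ^ p * ln (cos (t / 2))) 0 x).
  set (Lc := ln (cos (x / 2))).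
  assert (Hq : 0 < INR (S p)) by (apply lt_0_INR; lia).
  assert (H2p : 0 < (2 * PI) ^ (S p)) by (apply pow_lt; lra).
  set (c := INR (S p) / (2 * PI) ^ (S p)).
  set (L := c * (x ^ (S p) / INR (S p) * Lc - LHS)).
  assert (Hsum : forall k, sum_n T k = c * (x ^ (S p) / INR (S p) * sum_n (fun j => aj j x) k
                    - RInt (fun t => t ^ p * sum_n (fun j => aj j t) k) 0 x)).
  { intros k. rewrite (is_RInt_unique _ _ _ _ (sum_is p k x Hx)), sum_Gt. unfold c.
    fold T. change (sum_n T k) with (sR T k). change (sum_n (fun j => aj j x) k) with (sR (fun j => aj j x) k). apply eqR. field. split; lra. }
  set (M := c * (x ^ (S p) / INR (S p) + x * x ^ p)).
  assert (HM : 0 <= M).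
  { unfold M, c. pose proof (pow_le x p ltac:(lra)). pose proof (pow_le x (S p) ltac:(lra)).
    apply Rmult_le_pos. apply Rdiv_le_0_compat; lra.
    apply Rplus_le_le_0_compat. apply Rdiv_le_0_compat; lra. nra. }
  assert (Hbd : forall k, Rabs (sum_n T (S k) - L) <= M * / INR (S k)).
  { intros k. rewrite Hsum. unfold L.
    assert (Hk : 0 < INR (S k)) by (apply lt_0_INR; lia).
    assert (Hex1 : ex_RInt (fun t => t ^ p * sum_n (fun j => aj j t) (S k)) 0 x)
      by (eexists; apply sum_is; auto).
    assert (Hex2 := lc_ex p x Hx).
    assert (E : RInt (fun t => t ^ p * sum_n (fun j => aj j t) (S k)) 0 x - LHS =
                RInt (fun t => minus (t ^ p * sum_n (fun j => aj j t) (S k)) (t ^ p * ln (cos (t / 2)))) 0 x).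
    { transitivity (minus (RInt (fun t => t ^ p * sum_n (fun j => aj j t) (S k)) 0 x) (RInt (fun t => t ^ p * ln (cos (t / 2))) 0 x)). reflexivity. symmetry. apply (@RInt_minus R_CompleteNormedModule); auto. }
    assert (B1 : Rabs (RInt (fun t => minus (t ^ p * sum_n (fun j => aj j t) (S k)) (t ^ p * ln (cos (t / 2)))) 0 x)
                 <= (x - 0) * (x ^ p * / INR (S k))).
    { apply abs_RInt_le_const. lra. apply (@ex_RInt_minus R_NormedModule); auto.
      intros t Ht. pose proof (Sbound k t ltac:(lra)) as Sb.
      set (m := INR (S k)) in *. clearbody m.
      unfold minus, plus, opp; simpl.
      pose proof (pow_le t p ltac:(lra)). pose proof (pow_incr t x p ltac:(lra)).
      assert (0 <= / m) by (left; apply Rinv_0_lt_compat; lra).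
      rewrite Rabs_right.
      - replace (t ^ p * sum_n (fun j => aj j t) (S k) + - (t ^ p * ln (cos (t / 2))))
          with (t ^ p * (sum_n (fun j => aj j t) (S k) - ln (cos (t / 2)))) by ring.
        apply Rmult_le_compat; nra.
      - replace (t ^ p * sum_n (fun j => aj j t) (S k) + - (t ^ p * ln (cos (t / 2))))
          with (t ^ p * (sum_n (fun j => aj j t) (S k) - ln (cos (t / 2)))) by ring.
        apply Rle_ge. apply Rmult_le_pos; lra. }
    pose proof (Sbound k x Hx) as Sbx.
    assert (Hc : 0 < c) by (unfold c; apply Rdiv_lt_0_compat; lra).
    pose proof (pow_le x (S p) ltac:(lra)).
    set (Sx1 := sum_n (fun j => aj j x) (S k)) in *.
    set (R1 := RInt (fun t => t ^ p * sum_n (fun j => aj j t) (S k)) 0 x) in *.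
    set (R2 := RInt (fun t => minus (t ^ p * sum_n (fun j => aj j t) (S k)) (t ^ p * ln (cos (t / 2)))) 0 x) in *.
    replace (c * (x ^ S p / INR (S p) * Sx1 - R1) - c * (x ^ S p / INR (S p) * Lc - LHS))
      with (c * (x ^ S p / INR (S p) * (Sx1 - Lc) - R2)) by (rewrite <- E; ring).
    rewrite Rabs_mult, (Rabs_right c) by lra.
    unfold M. rewrite Rmult_assoc. apply Rmult_le_compat_l. lra.
    eapply Rle_trans. apply Rabs_triang. rewrite Rabs_Ropp.
    rewrite Rabs_mult, (Rabs_right (x ^ S p / INR (S p))) by (apply Rle_ge, Rdiv_le_0_compat; lra).
    rewrite (Rabs_right (Sx1 - Lc)) by (unfold Lc; lra).
    assert (x ^ S p / INR (S p) * (Sx1 - Lc) <= x ^ S p / INR (S p) * / INR (S k)).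
    { apply Rmult_le_compat_l. apply Rdiv_le_0_compat; lra. unfold Lc. lra. }
    rewrite Rminus_0_r in B1. nra. }
  assert (Hser : is_series T L).
  { assert (Hl : is_lim_seq (sum_n T) L); [|exact Hl].
    apply is_lim_seq_spec. intros eps.
    destruct (archimed_cor1 (eps / (M + 1))) as [N [HN1 HN2]].
    { apply Rdiv_lt_0_compat. apply cond_pos. lra. }
    exists N. intros n Hn. destruct n as [|k]; [lia|].
    eapply Rle_lt_trans. apply Hbd.
    assert (HNk : / INR (S k) <= / INR N).
    { apply Rinv_le_contravar. apply lt_0_INR; lia. apply le_INR; lia. }
    assert (/ INR N * (M + 1) < eps).
    { apply (Rmult_lt_reg_r (/ (M + 1))). apply Rinv_0_lt_compat; lra.
      rewrite Rmult_assoc, Rinv_r, Rmult_1_r by lra. exact HN1. }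
    assert (0 <= / INR (S k)) by (left; apply Rinv_0_lt_compat, lt_0_INR; lia).
    nra. }
  rewrite (is_series_unique T L Hser). unfold L, c. change LHS with (toR LHS). apply eqR. field. split; lra.
Qed.
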